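(* Let $k \ge 2$ and $E \ge 1$ be integers, and let $n_{k,E}$ be the smallest positive integer $n$ such that for every subset $S \subseteq \{0,\dots,n-1\}$ with at most $E$ elements there exist integers $r \ge 0$ and $s > 0$ with $r + s(k-1) \le n-1$ and $r + is \notin S$ for all $0 \le i \le k-1$. Then $n_{k,E} \le k(E+1)$, and $n_{k,E} = k(E+1)$ if and only if $E + 2 \le g$, where $g$ is the smallest prime factor of $k$.
   Context: $n_{k,E}$ is the minimum length of a sequence such that, whatever the positions of at most $E$ errors, some arithmetic progression of $k$ indices inside $\{0,\dots,n-1\}$ avoids all error positions. *)

(* Defs.v *)
From mathcomp Require Import all_boot.
Set Implicit Arguments. Unset Strict Implicit. Unset Printing Implicit Defensive.

Definition ap_avoids (n k : nat) (S : {set 'I_n}) : Prop :=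
  exists r s : nat, 0 < s /\ r + s * (k - 1) <= n - 1 /\
    forall i : nat, i <= k - 1 -> forall x : 'I_n, x \in S -> nat_of_ord x != r + i * s.

Definition good (k E n : nat) : Prop :=
  forall S : {set 'I_n}, #|S| <= E -> ap_avoids k S.

Definition is_nkE (k E m : nat) : Prop :=
  0 < m /\ good k E m /\ forall n : nat, 0 < n -> good k E n -> m <= n.

(* Main.v *)
Require Import Defs.
From mathcomp Require Import all_boot.
From mathcomp Require Import zify.
From Stdlib Require Import Classical.

Definition cnt n (S : {set 'I_n}) a b :=
  \sum_(a <= i < b) ([exists y in S, val y == i] : nat).

Arguments cnt {n}.

Lemma cnt_split {n} (S : {set 'I_n}) a b c : a <= b -> b <= c ->
  cnt S a c = cnt S a b + cnt S b c.
Proof. by move=> ab bc; rewrite /cnt (big_cat_nat ab bc). Qed.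

Lemma cnt_total {n} (S : {set 'I_n}) : cnt S 0 n = #|S|.
Proof.
rewrite /cnt big_mkord -sum1_card [in RHS]big_mkcond /=; apply: eq_bigr => i _.
have -> : [exists y in S, val y == val i] = (i \in S).
  apply/existsP/idP => [[y /andP [yS /eqP /val_inj <-]] //|iS].
  by exists i; rewrite iS eqxx.
by case: (i \in S).
Qed.

Lemma cnt_one {n} (S : {set 'I_n}) (x : 'I_n) : x \in S -> cnt S x x.+1 = 1.
Proof.
move=> xS; rewrite /cnt big_nat1.
have -> // : [exists y in S, val y == val x].
by apply/existsP; exists x; rewrite xS eqxx.
Qed.

Lemma cnt_window {n} k (S : {set 'I_n}) :
  (forall j, j + k <= n -> exists2 y : 'I_n, y \in S & j <= val y < j + k) ->
  forall m a, a + m * k <= n -> m <= cnt S a (a + m * k).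
Proof.
move=> H; elim=> [//|m IH] a le.
have [y yS /andP [y1 y2]] := H a ltac:(lia).
have {}y1 : a <= y := y1. have {}y2 : y < a + k := y2.
rewrite (cnt_split S a (a + k) (a + m.+1 * k)); try lia.
rewrite (cnt_split S (a) (y) (a + k)); try lia.
rewrite (cnt_split S (y) (y.+1) (a + k)); try lia.
rewrite cnt_one //.
have := IH (a + k) ltac:(lia).
rewrite (_ : a + k + m * k = a + m.+1 * k); lia.
Qed.

Lemma window_dec {n} k (S : {set 'I_n}) :
  (exists j, j + k <= n /\ forall y : 'I_n, y \in S -> ~~ (j <= val y < j + k)) \/
  (forall j, j + k <= n -> exists2 y : 'I_n, y \in S & j <= val y < j + k).
Proof.
case: (boolP [exists j : 'I_n.+1, (j + k <= n) &&
          [forall y in S, ~~ ((j <= val y) && (val y < j + k))]]) => [|b].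
  move/existsP=> [j /andP [jk /forall_inP Hj]]; left; exists j; split => //.
right=> j jk.
have jn : j < n.+1 by lia.
move/existsPn: b => /(_ (Ordinal jn)) /=; rewrite jk /=.
move/forall_inPn=> [y yS]; rewrite negbK => hy; by exists y.
Qed.

Lemma ap_window {n} k (S : {set 'I_n}) j : 0 < k -> j + k <= n ->
  (forall y : 'I_n, y \in S -> ~~ (j <= val y < j + k)) -> ap_avoids k S.
Proof.
move=> k0 jk Hj; exists j, 1; split => //; split; first lia.
move=> i ik x xS; apply/eqP => ex.
have := Hj x xS; rewrite /= ex; lia.
Qed.

Lemma good_full k E : 2 <= k -> good k E (k * (E + 1)).
Proof.
move=> hk S hS.
case: (window_dec k S) => [[j [jk Hj]]|H]; first exact: (ap_window k S j ltac:(lia) jk Hj).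
have := cnt_window k S H (E + 1) 0 ltac:(lia).
rewrite add0n [in X in cnt _ _ X]mulnC cnt_total; lia.
Qed.

Lemma good_N k E : 2 <= k -> pdiv k <= E + 1 -> good k E (k * (E + 1) - 1).
Proof.
move=> hk hp S hS.
case: (window_dec k S) => [[j [jk Hj]]|H]; first exact: (ap_window k S j ltac:(lia) jk Hj).
set N := k * (E + 1) - 1 in S hS H *.
have Hall : forall x : 'I_N, x \in S -> x %% k = k - 1.
  move=> x xS.
  have ck : x %% k < k by rewrite ltn_pmod //; lia.
  case: (ltnP (x %% k) (k - 1)) => cc; last lia.
  exfalso.
  set c := x %% k in ck cc *; set q := x %/ k.
  have xe : val x = q * k + c by rewrite /q /c -divn_eq.
  have xN : val x < N := ltn_ord x.
  have qE : q <= E by nia.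
  have h1 := cnt_window k S H q c ltac:(nia).
  have h2 := cnt_window k S H (E - q) x.+1 ltac:(nia).
  have := cnt_total S.
  rewrite (cnt_split S (0) (c) (N)); try lia.
  rewrite (cnt_split S (c) (c + q * k) (N)); try nia.
  have -> : c + q * k = x by lia.
  rewrite (cnt_split S (x) (x.+1) (N)); try lia.
  rewrite cnt_one //.
  rewrite (cnt_split S (x.+1) (x.+1 + (E - q) * k) N); try nia.
  have : c + q * k = x by lia.
  move=> e; rewrite e in h1; lia.
set p := pdiv k.
have pp : prime p by apply: pdiv_prime; lia.
have p2 : 2 <= p by apply: prime_gt1.
have pk : p %| k by apply: pdiv_dvd.
exists 0, p; split; first lia; split.
  have : p <= k by apply: pdiv_leq; lia.
  nia.
move=> i ik x xS; apply/eqP => ex.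
have hx := Hall x xS.
have : p %| x by rewrite ex add0n dvdn_mull.
rewrite (divn_eq x k) hx dvdn_addr; last exact: dvdn_mull.
move=> h.
have : p %| k - (k - 1) by apply: dvdn_sub.
have -> : k - (k - 1) = 1 by lia.
rewrite dvdn1; lia.
Qed.

Lemma mod_inj k r s a b : 0 < k -> coprime s k -> a < k -> b < k -> b <= a ->
  (r + a * s) %% k = (r + b * s) %% k -> a = b.
Proof.
move=> k0 cop ak bk ba e.
have bsas : b * s <= a * s by apply: leq_mul.
have : k %| (r + a * s) - (r + b * s).
  by rewrite -eqn_mod_dvd; [apply/eqP | lia].
rewrite (_ : (r + a * s) - (r + b * s) = (a - b) * s); last by rewrite mulnBl; lia.
rewrite Gauss_dvdl; last by rewrite coprime_sym.
case: (posnP (a - b)) => h; first lia.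
move/(dvdn_leq h); lia.
Qed.

Lemma bad k E n : 2 <= k -> E + 2 <= pdiv k -> 0 < n -> n <= k * (E + 1) - 1 ->
  ~ good k E n.
Proof.
move=> hk hp; case: n => [//|n'] _ hn Hg.
set S := [set x : 'I_n'.+1 | x %% k == k - 1].
have hS : #|S| <= E.
  pose f := fun i : 'I_E => (inord (i * k + k - 1) : 'I_n'.+1).
  have sub : S \subset [set f i | i in 'I_E].
    apply/subsetP => x; rewrite inE => /eqP hx.
    have xe := divn_eq x k; rewrite hx in xe.
    have xn := ltn_ord x.
    have iE : x %/ k < E.
      move: xe; set q := x %/ k => xe.
      have : q * k < E * k by lia.
      by rewrite ltn_pmul2r //; lia.
    apply/imsetP; exists (Ordinal iE) => //.
    apply: val_inj; rewrite /f /= inordK; lia.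
  apply: (leq_trans (subset_leq_card sub)).
  apply: (leq_trans (leq_imset_card _ _)).
  by rewrite card_ord.
have [r [s [s0 [hrs H]]]] := Hg S hS.
have k0 : 0 < k by lia.
case: (boolP (coprime s k)) => cop.
  pose f := fun i : 'I_k => (Ordinal (ltn_pmod (r + i * s) k0) : 'I_k).
  have finj : injective f.
    move=> i j /(congr1 val) /= e; apply: val_inj => /=.
    case: (leqP j i) => ij.
      exact: (mod_inj k r s i j k0 cop (ltn_ord i) (ltn_ord j) ij e).
    symmetry; apply: (mod_inj k r s j i k0 cop (ltn_ord j) (ltn_ord i)); first lia.
    by rewrite e.
  have km : k - 1 < k by lia.
  have := inj_card_onto finj (leqnn _) (Ordinal km).
  move/codomP=> [i /(congr1 val) /= hi].
  have ik := ltn_ord i.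
  have hx : r + i * s < n'.+1.
    have : i * s <= (k - 1) * s by apply: leq_mul; lia.
    lia.
  have xS : Ordinal hx \in S by rewrite inE /= -hi.
  have := H i ltac:(lia) (Ordinal hx) xS.
  by rewrite /= eqxx.
have g1 : 1 < gcdn s k.
  have : 0 < gcdn s k by rewrite gcdn_gt0 s0.
  move: cop; rewrite /coprime; lia.
have h1 : pdiv k <= gcdn s k by apply: pdiv_min_dvd => //; apply: dvdn_gcdr.
have h2 : gcdn s k <= s by apply: dvdn_leq => //; apply: dvdn_gcdl.
have h3 : pdiv k <= k by apply: pdiv_leq; lia.
have : (E + 2) * (k - 1) <= s * (k - 1) by apply: leq_mul; lia.
nia.
Qed.

Lemma exmin (P : nat -> Prop) n : P n -> exists m, P m /\ forall j, P j -> m <= j.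
Proof.
elim: n {-2}n (leqnn n) => [|N IH] n hn Pn.
  exists n; split => // j _; lia.
case: (classic (exists j, j < n /\ P j)) => [[j [jn Pj]]|nj].
  exact: (IH j ltac:(lia) Pj).
exists n; split => // j Pj; case: (leqP n j) => // jn.
by exfalso; apply: nj; exists j.
Qed.

Theorem lemma2 (k E : nat) (hk : 2 <= k) (hE : 1 <= E) :
  exists m : nat, is_nkE k E m /\ m <= k * (E + 1) /\
    (m = k * (E + 1) <-> E + 2 <= pdiv k).
Proof.
have Pf : 0 < k * (E + 1) /\ good k E (k * (E + 1)).
  by split; [nia | apply: good_full].
have [m [[m0 gm] mmin]] := exmin (fun n => 0 < n /\ good k E n) _ Pf.
have mle : m <= k * (E + 1) by apply: mmin.
exists m; split; first by split; [done | split; [done | move=> n n0 gn; apply: mmin]].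
split => //; split.
  move=> em; case: (leqP (E + 2) (pdiv k)) => // hp.
  have pos : 0 < k * (E + 1) - 1 by nia.
  have := mmin (k * (E + 1) - 1) (conj pos (good_N k E hk ltac:(lia))).
  lia.
move=> hp; case: (leqP (k * (E + 1)) m) => hm; first lia.
by exfalso; apply: (bad k E m hk hp m0 ltac:(lia) gm).
Qed.
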